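(* Let $G=(V,E)$ be a finite undirected graph, let $k>2$ be an integer, let $m=\lfloor k/2\rfloor$, let $C$ be a legitimate configuration (as defined in the context), and let $s\in S(C)$. Let $u\in V$ with $\mathrm{dist}(u,s)\le m-1$. Then every shortest path $(s=s_0,s_1,\dots,s_{d_u}=u)$ from $s$ to $u$ satisfies the following in $C$: for every clock index $i\in\{d_u+1,\dots,m-1\}$ there exists an integer $a\in\{0,\dots,d_u\}$ such that 1. for all $\ell\in\{0,\dots,a\}$, $(b_{i,s_\ell},c_{i,s_\ell})=(\downarrow,c_{i,s})$; 2. there exists $c'\in\{c_{i,s}-1,c_{i,s}\}$ such that for all $\ell\in\{a+1,\dots,d_u\}$, $(b_{i,s_\ell},c_{i,s_\ell})=(\uparrow,c')$.
   Context: $\mathrm{dist}$ is the graph distance in $G$ and $N(u)$ the neighbourhood of $u$. A configuration $C$ assigns to each node $u$ the values $d_u\in\{0,\dots,k-1\}$, $err_u\in\{0,1\}$, and for each $i\in\{1,\dots,m-1\}$ a clock value $c_{i,u}\in\mathbb{Z}/4\mathbb{Z}$ and an arrow $b_{i,u}\in\{\uparrow,\downarrow\}$. Let $S(C)=\{u\in V: d_u=0\}$. Clock arithmetic is in $\mathbb{Z}/4\mathbb{Z}$. Predicates on a node $u$: - $\mathrm{well\_defined}(u)$: $err_u=0$, $|d_u-d_v|\le 1$ for all $v\in N(u)$, and if $d_u>0$ then some $v\in N(u)$ has $d_v=d_u-1$. - $\mathrm{leader\_down}(u)$: if $d_u=0$ then $b_{i,u}=\downarrow$ for all $i\in\{1,\dots,m-1\}$.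 - $\mathrm{bc\_up}(u,i)$: for every $v\in N(u)$ with $d_v=d_u-1$, $(b_{i,u},b_{i,v},c_{i,v})\in\{(\uparrow,\uparrow,c_{i,u}),(\uparrow,\downarrow,c_{i,u}),(\uparrow,\downarrow,c_{i,u}+1),(\downarrow,\downarrow,c_{i,u})\}$. - $\mathrm{bc\_down}(u,i)$: for every $v\in N(u)$ with $d_v=d_u+1$, $(b_{i,u},b_{i,v},c_{i,v})\in\{(\uparrow,\uparrow,c_{i,u}),(\downarrow,\uparrow,c_{i,u}),(\downarrow,\uparrow,c_{i,u}-1),(\downarrow,\downarrow,c_{i,u})\}$. - $\mathrm{branch\_coherence}(u)$: either $d_u\ge m$, or ($\mathrm{bc\_up}(u,d_u)$ holds, and $\mathrm{bc\_up}(u,i)$ and $\mathrm{bc\_down}(u,i)$ hold for all $i\in\{d_u+1,\dots,m-1\}$). (For $d_u=0$ the condition $\mathrm{bc\_up}(u,0)$ is vacuous.) A configuration $C$ is legitimate if every node $u$ satisfies $\mathrm{well\_defined}(u)$, $\mathrm{leader\_down}(u)$ and $\mathrm{branch\_coherence}(u)$, and any two distinct nodes of $S(C)$ are at distance at least $k$ in $G$. *)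

(* Defs.v *)
From mathcomp Require Import all_boot all_order all_algebra.
Set Implicit Arguments. Unset Strict Implicit. Unset Printing Implicit Defensive.
Import GRing.Theory.
Local Open Scope ring_scope.

Inductive arrow := Up | Down.

(* A configuration for parameter k on node set V.
   Clock indices i are natural numbers; only i in {1,...,m-1} are meaningful
   (values at other indices are never inspected). *)
Record config (V : finType) (k : nat) := Config {
  dv  : V -> 'I_k;
  err : V -> bool;                 (* err_u, true = 1 *)
  clk : nat -> V -> 'Z_4;
  arr : nat -> V -> arrow          (* b_{i,u} *)
}.

Section Graph.
Variable V : finType.
Variable e : rel V.   (* adjacency of the undirected graph G; v \in N(u) <-> e u v *)

Definition walk (p : nat -> V) (n : nat) : Prop :=
  forall j, (j < n)%N -> e (p j) (p j.+1).

Definition connects (x y : V) (n : nat) : Prop :=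
  exists p : nat -> V, [/\ p 0%N = x, p n = y & walk p n].

Definition distance (x y : V) (n : nat) : Prop :=
  connects x y n /\ forall n', connects x y n' -> (n <= n')%N.

(* dist(x,y) >= n (also holds when x,y are disconnected, dist = +oo) *)
Definition dist_ge (x y : V) (n : nat) : Prop :=
  forall n', connects x y n' -> (n <= n')%N.

Variable k : nat.
Definition mm : nat := k./2.
Variable C : config V k.

Definition d (u : V) : nat := dv C u.

Definition well_defined (u : V) : Prop :=
  [/\ err C u = false,
      (forall v, e u v -> (d u <= d v + 1)%N /\ (d v <= d u + 1)%N)
    & (0 < d u)%N -> exists v, e u v /\ (d v + 1 = d u)%N].

Definition leader_down (u : V) : Prop :=
  d u = 0%N -> forall i, (1 <= i <= mm - 1)%N -> arr C i u = Down.

Definition bc_up (u : V) (i : nat) : Prop :=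
  forall v, e u v -> (d v + 1 = d u)%N ->
    let cu := clk C i u in
    let t := (arr C i u, arr C i v, clk C i v) in
    t = (Up, Up, cu) \/ t = (Up, Down, cu) \/ t = (Up, Down, cu + 1)
    \/ t = (Down, Down, cu).

Definition bc_down (u : V) (i : nat) : Prop :=
  forall v, e u v -> d v = (d u + 1)%N ->
    let cu := clk C i u in
    let t := (arr C i u, arr C i v, clk C i v) in
    t = (Up, Up, cu) \/ t = (Down, Up, cu) \/ t = (Down, Up, cu - 1)
    \/ t = (Down, Down, cu).

Definition branch_coherence (u : V) : Prop :=
  (mm <= d u)%N \/
  (bc_up u (d u) /\
   forall i, (d u + 1 <= i <= mm - 1)%N -> bc_up u i /\ bc_down u i).

Definition in_S (u : V) : Prop := d u = 0%N.

Definition legitimate : Prop :=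
  (forall u, [/\ well_defined u, leader_down u & branch_coherence u]) /\
  (forall s1 s2, in_S s1 -> in_S s2 -> s1 <> s2 -> dist_ge s1 s2 k).

End Graph.

(* Main.v *)
Require Import Defs.
From mathcomp Require Import all_boot all_order all_algebra.
From mathcomp Require Import zify.
Import GRing.Theory.
Local Open Scope ring_scope.

Section Aux.
Variable V : finType.
Variable e : rel V.
Hypothesis e_sym : symmetric e.

Lemma conn_trans x y z a b :
  connects e x y a -> connects e y z b -> connects e x z (a + b).
Proof.
move=> [p [p0 pa wp]] [q [q0 qb wq]].
exists (fun j => if (j <= a)%N then p j else q (j - a)%N); split.
- by rewrite leq0n.
- case: ifP => h.
  + have hb : b = 0%N by lia.
    subst b. by rewrite addn0 pa -q0 qb.
  + by have -> : (a + b - a = b)%N by lia.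
- move=> j hj. case: (ltnP j a) => h1.
  + have -> : (j <= a)%N = true by lia.
    exact: wp.
  + case: ifP => h2.
    * have ja : j = a by lia. subst j.
      rewrite pa -q0. have -> : (a.+1 - a = 1)%N by lia. apply: wq. lia.
    * have -> : (j.+1 - a = (j - a).+1)%N by lia. apply: wq. lia.
Qed.

Lemma conn_sym x y n : connects e x y n -> connects e y x n.
Proof.
move=> [p [p0 pn wp]]. exists (fun j => p (n - j)%N); split.
- by rewrite subn0.
- by rewrite subnn.
- move=> j hj. rewrite e_sym. have -> : (n - j = (n - j.+1).+1)%N by lia.
  apply: wp. lia.
Qed.

Lemma conn_edge x y : e x y -> connects e x y 1.
Proof.
move=> h. exists (fun j => if j == 0%N then x else y); split => //.
move=> j hj. have -> : j = 0%N by lia. by [].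
Qed.

Lemma conn_refl x : connects e x x 0.
Proof. by exists (fun _ => x); split => // j. Qed.

End Aux.
Arguments conn_trans {V e x y z a b}.
Arguments conn_sym {V e} e_sym {x y n}.
Arguments conn_edge {V e x y}.
Arguments conn_refl {V e}.

Theorem lemma3 (V : finType) (e : rel V)
  (e_sym : symmetric e) (e_irr : irreflexive e)
  (k : nat) (hk : (2 < k)%N) (C : config V k)
  (HC : legitimate e C)
  (s : V) (Hs : in_S C s)
  (u : V) (n : nat) (Hdist : distance e s u n) (Hn : (n <= mm k - 1)%N)
  (p : nat -> V) (Hp0 : p 0%N = s) (Hpn : p n = u) (Hwalk : walk e p n) :
  forall i, (d C u + 1 <= i <= mm k - 1)%N ->
  exists a, (a <= d C u)%N /\
    (forall l, (l <= a)%N -> arr C i (p l) = Down /\ clk C i (p l) = clk C i s) /\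
    exists c', (c' = clk C i s - 1 \/ c' = clk C i s) /\
      (forall l, (a + 1 <= l <= d C u)%N ->
         arr C i (p l) = Up /\ clk C i (p l) = c').
Proof.
case: HC => Hloc Hsep.
have desc : forall t v, d C v = t -> exists s', d C s' = 0%N /\ connects e s' v t.
  elim => [|t IH] v hv.
    exists v; split => //; exact: conn_refl.
  have [[_ _ h] _ _] := Hloc v.
  have [w [ew hw]] : exists w, e v w /\ (d C w + 1 = d C v)%N by apply: h; lia.
  have [s' [hs' cs']] := IH w ltac:(lia).
  exists s'; split => //. rewrite -addn1. apply: conn_trans cs' _.
  apply: conn_edge. by rewrite e_sym.
have pre : forall l, (l <= n)%N -> connects e s (p l) l.
  move=> l hl. exists p; split => //. move=> j hj; apply: Hwalk; lia.
have suf : forall l, (l <= n)%N -> connects e (p l) u (n - l).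
  move=> l hl. exists (fun j => p (j + l)%N); split; first by [].
    by have -> : (n - l + l = n)%N by lia.
  move=> j hj. rewrite addSn. apply: Hwalk. lia.
have lower : forall l j, (l <= n)%N -> connects e s (p l) j -> (l <= j)%N.
  move=> l j hl hc. have := Hdist.2 _ (conn_trans hc (suf l hl)). lia.
have half : (n + n < k)%N.
  have := odd_double_half k. rewrite -addnn /mm in Hn *. lia.
have dub : forall l, (l <= n)%N -> (d C (p l) <= l)%N.
  elim => [|l IH] hl; first by rewrite Hp0 Hs.
  have [[_ h _] _ _] := Hloc (p l.+1).
  have := (h (p l) ltac:(rewrite e_sym; apply: Hwalk; lia)).1.
  have := IH ltac:(lia). lia.
have dlb : forall l, (l <= n)%N -> (l <= d C (p l))%N.
  move=> l hl. have [s' [hs' cs']] := desc _ (p l) erefl.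
  case: (eqVneq s' s) => [eq|ne]; first by subst s'; exact: lower cs'.
  have := Hsep s s' Hs hs' (fun h => ltac:(by rewrite h eqxx in ne)).
  move/(_ _ (conn_trans (pre l hl) (conn_sym e_sym cs'))). lia.
have dp : forall l, (l <= n)%N -> d C (p l) = l.
  move=> l hl. apply/eqP; rewrite eqn_leq dub // dlb //.
have du : d C u = n by rewrite -Hpn dp.
rewrite du => i /andP [hi1 hi2].
have step : forall l, (l < n)%N ->
  let t := (arr C i (p l.+1), arr C i (p l), clk C i (p l)) in
  let cu := clk C i (p l.+1) in
  t = (Up, Up, cu) \/ t = (Up, Down, cu) \/ t = (Up, Down, cu + 1)
    \/ t = (Down, Down, cu).
  move=> l hl. have [_ _ hbc] := Hloc (p l.+1).
  rewrite /branch_coherence dp in hbc; last by lia.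
  case: hbc => [|[_ hbc]]; first by rewrite /mm in Hn *; lia.
  have [hup _] := hbc i ltac:(lia).
  apply: hup; last by rewrite !dp; lia.
  rewrite e_sym; apply: Hwalk; lia.
have lead : arr C i s = Down.
  have [_ hld _] := Hloc s. apply: hld => //. lia.
suff main : forall N, (N <= n)%N -> exists a, (a <= N)%N /\
    (forall l, (l <= a)%N -> arr C i (p l) = Down /\ clk C i (p l) = clk C i s) /\
    exists c', (c' = clk C i s - 1 \/ c' = clk C i s) /\
      (forall l, (a + 1 <= l <= N)%N ->
         arr C i (p l) = Up /\ clk C i (p l) = c').
  exact: main.
elim => [|N IH] hN.
  exists 0%N; split => //; split.
    move=> l hl; have -> : l = 0%N by lia. by rewrite Hp0.
  exists (clk C i s); split; [by right| move=> l; lia].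
have [a [ha [hD [c' [hc' hU]]]]] := IH ltac:(lia).
have st := step N ltac:(lia). simpl in st.
case: (eqVneq a N) => [eaN|neaN].
- subst a. have [dN cN] := hD N (leqnn N).
  rewrite dN cN in st.
  case: st => [[_ ? _]|[[hu hc]|[[hu hc]|[hd hc]]]] //.
  + exists N; split => //; split => //. exists (clk C i s); split; first by right.
    move=> l hl; have -> : l = N.+1 by lia. by rewrite hu hc.
  + exists N; split => //; split => //. exists (clk C i (p N.+1)); split.
      by left; rewrite hc addrK.
    move=> l hl; have -> : l = N.+1 by lia. by rewrite hu.
  + exists N.+1; split => //; split => //.
      move=> l hl. case: (ltnP l N.+1) => hl'; first by apply: hD; lia.
      have -> : l = N.+1 by lia. by rewrite hd hc.
    exists (clk C i s); split; [by right | move=> l; lia].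
- have [uN cN] := hU N ltac:(lia).
  rewrite uN cN in st.
  case: st => [[hu hc]|[[_ ? _]|[[_ ? _]|[_ ? _]]]] //.
  exists a; split; first lia; split => //. exists c'; split => //.
  move=> l hl. case: (ltnP l N.+1) => hl'; first by apply: hU; lia.
  have -> : l = N.+1 by lia. by rewrite hu hc.
Qed.
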